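(* Let $\mathcal E$ be a nonlinear order preserving form on $L^2(\mu)$. Then $\||f|\|_L\le\|f\|_L$ for all $f\in M(\mathcal E)$. If $\mathcal E$ is a nonlinear Dirichlet form, then $\|Cf\|_L\le\|f\|_L$ for all normal contractions $C\colon\mathbb R\to\mathbb R$ and all $f\in M(\mathcal E)$.
   Context: $(X,\mathfrak A,\mu)$ is a $\sigma$-finite measure space. All convex functionals $\mathcal E\colon L^2(\mu)\to[0,\infty]$ are assumed symmetric ($\mathcal E(-f)=\mathcal E(f)$) with $\mathcal E(0)=0$. A normal contraction is a 1-Lipschitz $C\colon\mathbb R\to\mathbb R$ with $C(0)=0$; it operates on $\mathcal E$ if $\mathcal E(f+Cg)+\mathcal E(f-Cg)\le\mathcal E(f+g)+\mathcal E(f-g)$ for all $f,g\in L^2(\mu)$. A nonlinear order preserving form is a lower semicontinuous convex such $\mathcal E$ on which $x\mapsto|x|$ operates; a nonlinear Dirichlet form is one on which all normal contractions operate. $M(\mathcal E)=\{f:\lim_{\lambda\to0+}\mathcal E(\lambda f)=0\}$ and $\|f\|_L=\inf\{\lambda>0:\mathcal E(\lambda^{-1}f)\le1\}$ for $f\in M(\mathcal E)$. *)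

(* Defs.v *)
From HB Require Import structures.
From mathcomp Require Import all_boot all_order all_algebra.
From mathcomp Require Import all_classical all_reals all_analysis.
Set Implicit Arguments. Unset Strict Implicit. Unset Printing Implicit Defensive.
Import Order.TTheory GRing.Theory Num.Theory.
Import numFieldNormedType.Exports.
Local Open Scope classical_set_scope.
Local Open Scope ring_scope.

(* L^2(mu) is modelled by square integrable measurable functions
   (f \in Lfun mu 2), i.e. representatives.  A functional is
   a map E : (T -> R) -> \bar R, only ever evaluated on L^2 functions. *)

Section Defs.
Context {d : measure_display} {T : measurableType d} {R : realType}.
Variable mu : {measure set T -> \bar R}.

Definition L2 (f : T -> R) : Prop := f \in Lfun mu 2%:E.

Definition convex_functional (E : (T -> R) -> \bar R) : Prop :=
  [/\ forall f, L2 f -> (0 <= E f)%E,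
      forall f g (t : R), L2 f -> L2 g -> 0 <= t <= 1 ->
        (E (fun x => (t * f x + (1 - t) * g x)%R)
          <= t%:E * E f + (1 - t)%R%:E * E g)%E,
      forall f, L2 f -> E (fun x => (- f x)%R) = E f &
      E (fun _ => 0) = 0%E].

Definition L2_lsc (E : (T -> R) -> \bar R) : Prop :=
  forall (fn : nat -> T -> R) (f : T -> R),
    (forall n, L2 (fn n)) -> L2 f ->
    (('N[mu]_2%:E[EFin \o (fn n \- f)%R])%E @[n --> \oo] --> 0%E) ->
    forall a : R, (a%:E < E f)%E -> \forall n \near \oo, (a%:E < E (fn n))%E.

Definition normal_contraction (C : R -> R) : Prop :=
  C 0 = 0 /\ forall x y, `|C x - C y| <= `|x - y|.

Definition operates (C : R -> R) (E : (T -> R) -> \bar R) : Prop :=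
  forall f g, L2 f -> L2 g ->
    (E (fun x => (f x + C (g x))%R) + E (fun x => (f x - C (g x))%R)
      <= E (fun x => (f x + g x)%R) + E (fun x => (f x - g x)%R))%E.

Definition order_preserving_form (E : (T -> R) -> \bar R) : Prop :=
  [/\ convex_functional E, L2_lsc E & operates (fun x => `|x|) E].

Definition dirichlet_form (E : (T -> R) -> \bar R) : Prop :=
  [/\ convex_functional E, L2_lsc E &
      forall C, normal_contraction C -> operates C E].

Definition ME (E : (T -> R) -> \bar R) (f : T -> R) : Prop :=
  L2 f /\ (E (fun x => l * f x) @[l --> 0^'+] --> 0%E).

Definition normL (E : (T -> R) -> \bar R) (f : T -> R) : \bar R :=
  ereal_inf [set l%:E | l in [set l : R | 0 < l /\ (E (fun x => (l^-1 * f x)%R) <= 1)%E]].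

End Defs.

(* Main.v *)
Require Import Defs.
From mathcomp Require Import lra.
From HB Require Import structures.
From mathcomp Require Import all_boot all_order all_algebra.
From mathcomp Require Import all_classical all_reals all_analysis.
Import Order.TTheory GRing.Theory Num.Theory.
Import numFieldNormedType.Exports.
Local Open Scope classical_set_scope.
Local Open Scope ring_scope.

Lemma lip_cont (R : realType) (C : R -> R) :
  (forall x y, `|C x - C y| <= `|x - y|) -> continuous C.
Proof.
move=> HC x; apply/cvgrPdist_lt => e e0; near=> y.
apply: le_lt_trans (HC x y) _.
near: y; by apply: cvgr_dist_lt => //; exact: cvg_id.
Unshelve. all: by end_near. Qed.

Lemma L2_comp d (T : measurableType d) (R : realType)
  (mu : {measure set T -> \bar R}) (C : R -> R) (h : T -> R) :
  (forall x y, `|C x - C y| <= `|x - y|) -> (forall x, `|C x| <= `|x|) ->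
  L2 mu h -> L2 mu (fun x => C (h x)).
Proof.
move=> HC HC0; rewrite /L2 !inE => /andP[]; rewrite !inE /= /finite_norm => mh hfin.
have mCh : measurable_fun [set: T] (fun x => C (h x)).
  apply: measurableT_comp => //; apply: measurable_realfun.continuous_measurable_fun.
  exact: lip_cont.
apply/andP; split; first by rewrite inE.
rewrite inE /= /finite_norm.
apply: le_lt_trans hfin.
rewrite unlock /=.
apply: gt0_ler_poweR => //.
- by rewrite in_itv/= leey integral_ge0// => x _; exact: poweR_ge0.
- by rewrite in_itv/= leey integral_ge0// => x _; exact: poweR_ge0.
apply: ge0_le_integral => //.
- apply/measurable_realfun.measurable_EFinP; apply: (measurableT_comp (measurable_realfun.measurable_powR _)).
  exact: measurableT_comp.
- apply/measurable_realfun.measurable_EFinP; apply: (measurableT_comp (measurable_realfun.measurable_powR _)).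
  exact: measurableT_comp.
move=> x _; rewrite lee_fin.
by apply: ge0_ler_powR => //; rewrite nnegrE.
Qed.

Lemma L2_scale d (T : measurableType d) (R : realType)
  (mu : {measure set T -> \bar R}) (a : R) (h : T -> R) :
  L2 mu h -> L2 mu (fun x => a * h x).
Proof.
move=> hL; have := @Lfun_scale _ _ _ mu h a 2 (ler1n R 2) hL.
suff -> : (fun x => a * h x) = a \o* h by [].
by apply/funext => x /=; rewrite mulrC.
Qed.

Lemma dbl_le (R : realType) (x y : \bar R) :
  (0 <= x)%E -> (x + x <= y + y)%E -> (x <= y)%E.
Proof.
move: x y => [r| |] [s| |] //= x0.
- by rewrite -!EFinD !lee_fin => ?; lra.
- by move=> _; exact: leey.
Qed.

Lemma E_contr d (T : measurableType d) (R : realType)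
  (mu : {measure set T -> \bar R}) (E : (T -> R) -> \bar R) (C : R -> R) (h : T -> R) :
  convex_functional mu E -> operates mu C E -> L2 mu h -> L2 mu (fun x => C (h x)) ->
  (E (fun x => C (h x)) <= E h)%E.
Proof.
move=> [E0 _ Esym _] HC hL ChL.
have L0 : L2 mu (fun _ => 0).
  by apply: (@L2_comp _ _ _ mu (fun _ => 0) h) => // *; rewrite ?subrr !normr0.
have := HC (fun _ => 0) h L0 hL.
have e1 : (fun x => 0 + C (h x)) = (fun x => C (h x)) by apply/funext => x; rewrite add0r.
have e2 : (fun x => 0 - C (h x)) = (fun x => - C (h x)) by apply/funext => x; rewrite sub0r.
have e3 : (fun x => 0 + h x) = h by apply/funext => x; rewrite add0r.
have e4 : (fun x => 0 - h x) = (fun x => - h x) by apply/funext => x; rewrite sub0r.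
rewrite /= e1 e2 e3 e4 Esym // Esym //.
by apply: dbl_le; apply: E0.
Qed.

Lemma normL_mono d (T : measurableType d) (R : realType)
  (E : (T -> R) -> \bar R) (f g : T -> R) :
  (forall l : R, 0 < l -> (E (fun x => (l^-1 * f x)%R) <= 1)%E -> (E (fun x => (l^-1 * g x)%R) <= 1)%E) ->
  (normL E g <= normL E f)%E.
Proof.
move=> H; rewrite /normL; apply: ereal_inf_le_tmp => _ [l [l0 Hl] <-].
by exists l => //; split => //; exact: H.
Qed.

Theorem lemma3p3 (d : measure_display) (T : measurableType d) (R : realType)
  (mu : {measure set T -> \bar R}) (hmu : sigma_finite [set: T] mu)
  (E : (T -> R) -> \bar R) :
  (order_preserving_form mu E ->
     forall f, ME mu E f -> (normL E (fun x => (`|f x|)%R) <= normL E f)%E) /\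
  (dirichlet_form mu E ->
     forall (C : R -> R), normal_contraction C ->
     forall f, ME mu E f -> (normL E (fun x => C (f x)) <= normL E f)%E).
Proof.
split.
- move=> [cf _ Habs] f [fL _]; apply: normL_mono => l l0 Hl.
  have e : (fun x => l^-1 * `|f x|) = (fun x => `|l^-1 * f x|).
    by apply/funext => x; rewrite normrM gtr0_norm ?invr_gt0.
  rewrite e; apply: le_trans Hl.
  have hL := @L2_scale _ _ _ mu l^-1 f fL.
  apply: (@E_contr _ _ _ mu E (fun x => `|x|)) => //.
  apply: L2_comp => //; first by move=> x y; exact: ler_dist_dist.
  by move=> x; rewrite normr_id.
- move=> [cf _ Hop] C [C0 HC] f [fL _]; apply: normL_mono => l l0 Hl.
  pose Cl := fun x => l^-1 * C (l * x).
  have e : (fun x => l^-1 * C (f x)) = (fun x => Cl (l^-1 * f x)).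
    by apply/funext => x; rewrite /Cl mulrA mulfV ?gt_eqF // mul1r.
  have Cl0 : Cl 0 = 0 by rewrite /Cl mulr0 C0 mulr0.
  have HCl : forall x y, `|Cl x - Cl y| <= `|x - y|.
    move=> x y; rewrite /Cl -mulrBr normrM gtr0_norm ?invr_gt0 //.
    apply: le_trans (ler_wpM2l _ (HC _ _)) _; first by rewrite invr_ge0 ltW.
    by rewrite -mulrBr normrM gtr0_norm // mulKf ?gt_eqF.
  have HCl0 : forall x, `|Cl x| <= `|x|.
    by move=> x; have := HCl x 0; rewrite Cl0 !subr0.
  rewrite e; apply: le_trans Hl.
  have hL := @L2_scale _ _ _ mu l^-1 f fL.
  apply: (@E_contr _ _ _ mu E Cl) => //; last exact: L2_comp.
  by apply: Hop; split.
Qed.
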